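(* Let $h\in\mathbb{R}[x_1,\ldots,x_n]$ be hyperbolic of degree $d$ with respect to $\mathbf{e}$, let $k$ be a positive integer, let $\mathbf{v}\in\mathbb{R}^n$, and let $$g_{\mathbf{v}}(t):=(1-D_{\mathbf{v}})^k(1-D_{\mathbf{e}}+kD_{\mathbf{v}})h(t\mathbf{e}).$$ Then $g_{\mathbf{v}}(t)=T_{k,d}\big(h(t\mathbf{e}-\mathbf{v})\big)$, where $T_{k,d}:\mathbb{R}[t]\to\mathbb{R}[t]$ is the linear operator $$T_{k,d}\Big(\sum_{j\geq0}a_jt^j\Big)=-\sum_{j=0}^d\Big(\frac{j+1}{k+1}a_{j+1}+(d-1-j)a_j\Big)(d-j)!\binom{k+1}{d-j}t^j.$$ Moreover, if $f$ is a $[0,1/k]$-rooted polynomial of degree $d$, then $T_{k,d}(f)$ is real-rooted.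
   Context: A homogeneous polynomial $h$ of degree $d$ is hyperbolic with respect to $\mathbf{e}\in\mathbb{R}^n$ if $h(\mathbf{e})\neq0$ and for every $\mathbf{x}$, $t\mapsto h(t\mathbf{e}-\mathbf{x})$ has only real zeros. $D_{\mathbf{v}}=\sum_kv_k\partial/\partial x_k$ is the directional derivative; in the expression for $g_{\mathbf{v}}$ the operator is applied to $h$ and the result evaluated at $t\mathbf{e}$. For an interval $I\subseteq\mathbb{R}$, a univariate polynomial is $I$-rooted if all its zeros lie in $I$. *)

(* Defs.v *)
From mathcomp Require Import all_boot all_order all_algebra.
From mathcomp Require Import reals.
From mathcomp Require Import mpoly.

Set Implicit Arguments.
Unset Strict Implicit.
Unset Printing Implicit Defensive.

Import Order.TTheory GRing.Theory Num.Theory.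
Local Open Scope ring_scope.

Definition real_rooted (R : realType) (p : {poly R}) : Prop :=
  exists s : seq R, p = lead_coef p *: \prod_(x <- s) ('X - x%:P).

Definition interval_rooted (R : realType) (a b : R) (p : {poly R}) : Prop :=
  exists s : seq R, all (fun x => a <= x <= b) s /\
    p = lead_coef p *: \prod_(x <- s) ('X - x%:P).

(* The univariate polynomial t |-> q(t e - x). *)
Definition restr (R : realType) (n : nat) (q : {mpoly R[n]})
    (e x : 'I_n -> R) : {poly R} :=
  mmap (fun c : R => c%:P) (fun i => e i *: 'X - (x i)%:P) q.

Definition hyperbolic (R : realType) (n : nat) (h : {mpoly R[n]})
    (e : 'I_n -> R) : Prop :=
  h.@[e] != 0 /\ forall x : 'I_n -> R, real_rooted (restr h e x).

Definition Dir (R : realType) (n : nat) (v : 'I_n -> R) (q : {mpoly R[n]})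
    : {mpoly R[n]} :=
  \sum_(i < n) v i *: q^`M(i).

Definition gv (R : realType) (n k : nat) (h : {mpoly R[n]})
    (e v : 'I_n -> R) : {poly R} :=
  restr (iter k (fun q => q - Dir v q) (h - Dir e h + k%:R *: Dir v h))
        e (fun _ => 0).

Definition Tkd (R : realType) (k d : nat) (p : {poly R}) : {poly R} :=
  - \sum_(j < d.+1)
      ((j.+1)%:R / (k.+1)%:R * p`_(j.+1) + (d%:R - 1 - j%:R) * p`_j)
        * ((d - j)`!)%:R * ('C(k.+1, d - j))%:R *: 'X^j.

(* Main.v *)
Require Import Defs.
From mathcomp Require Import all_boot all_order all_algebra.
From mathcomp Require Import reals.
From mathcomp Require Import mpoly.
From mathcomp Require Import complex.
From mathcomp Require Import ring lra zify.
Import Order.TTheory GRing.Theory Num.Theory.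
Local Open Scope ring_scope.
Set Implicit Arguments.
Unset Strict Implicit.
Section Iter.
Variable S : comNzRingType.

Definition Lop (p : {poly S}) := p - p^`().
Definition iterL k (p : {poly S}) := iter k Lop p.

Lemma iterLD k p q : iterL k (p + q) = iterL k p + iterL k q.
Proof.
elim: k => //= k IH; rewrite /iterL /= -!/(iterL _ _) IH /Lop derivD; ring.
Qed.

Lemma iterLZ k (c : S) p : iterL k (c *: p) = c *: iterL k p.
Proof.
elim: k => //= k IH; rewrite /iterL /= -!/(iterL _ _) IH /Lop derivZ scalerBr //.
Qed.

Lemma iterL0 k : iterL k 0 = 0.
Proof. by have := iterLZ k 0 0; rewrite !scale0r. Qed.

Lemma iterLN k p : iterL k (- p) = - iterL k p.
Proof. by rewrite -scaleN1r iterLZ scaleN1r. Qed.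

Lemma iterLB k p q : iterL k (p - q) = iterL k p - iterL k q.
Proof. by rewrite iterLD iterLN. Qed.

Lemma iterL_sum k (I : Type) (r : seq I) (F : I -> {poly S}) :
  iterL k (\sum_(i <- r) F i) = \sum_(i <- r) iterL k (F i).
Proof.
elim: r => [|x r IH]; first by rewrite !big_nil iterL0.
by rewrite !big_cons iterLD IH.
Qed.

Lemma iterL_deriv k p : iterL k p^`() = (iterL k p)^`().
Proof.
elim: k => //= k IH; rewrite /iterL /= -!/(iterL _ _) IH /Lop derivB //.
Qed.

Lemma iterLS k p : iterL k.+1 p = iterL k (Lop p).
Proof. by rewrite /iterL iterSr. Qed.

Lemma iterL_pow k (c : S) m :
  (iterL k ((c%:P - 'X) ^+ m)).[c] = (m`! * 'C(k, m))%:R.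
Proof.
elim: k m => [|k IH] m.
  rewrite /iterL /= horner_exp hornerD hornerN hornerC hornerX subrr expr0n.
  by case: m => [|m] //=; rewrite muln0.
have hd : (c%:P - 'X)^`() = -1 :> {poly S}.
  by rewrite derivB derivC derivX sub0r.
rewrite iterLS /Lop deriv_exp hd mulN1r -mulNrn opprK iterLD hornerD.
case: m => [|m]; first by rewrite mulr0n iterL0 horner0 addr0 IH !bin0.
rewrite -scaler_nat iterLZ hornerZ /= !IH.
rewrite -natrM -natrD; congr (_%:R).
rewrite binS factS; ring.
Qed.


Definition hom d (p Y : {poly S}) := \sum_(j < d.+1) p`_j *: ('X^j * Y ^+ (d - j)).

Lemma homM d (p Y : {poly S}) (x : S) : (size p <= d.+1)%N ->
  hom d.+1 (p * ('X - x%:P)) Y = hom d p Y * ('X - x *: Y).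
Proof.
move=> sp.
have pd : p`_d.+1 = 0 by apply: nth_default.
rewrite /hom mulrBr -mul_polyC.
under eq_bigr do rewrite coefB coefMX coefMC scalerBl.
rewrite sumrB big_ord_recl /= scale0r add0r.
rewrite [X in _ - X]big_ord_recr /= pd mul0r scale0r addr0.
rewrite mulrBr mulr_suml mulr_suml; congr (_ - _).
  apply: eq_bigr => i _; rewrite /bump /= add1n subSS.
  by rewrite exprS -scalerAl; congr (_ *: _); ring.
apply: eq_bigr => i _; rewrite -scalerAl subSn; last by rewrite -ltnS.
rewrite -scalerA; congr (_ *: _); rewrite -mul_polyC exprS.
ring.
Qed.

Lemma hom_prod (c : S) (s : seq S) Y :
  hom (size s) (c *: \prod_(x <- s) ('X - x%:P)) Y = c *: \prod_(x <- s) ('X - x *: Y).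
Proof.
elim: s => [|x s IH].
  rewrite /hom !big_nil big_ord1 /= alg_polyC coefC /= expr0 !mulr1 alg_polyC.
  by [].
rewrite !big_cons /= -!mul_polyC mulrCA [_ * (_ * _)]mulrC mul_polyC homM ?IH.
  by rewrite [c%:P * _]mul_polyC IH -!mul_polyC; ring.
by rewrite [c%:P * _]mul_polyC (leq_trans (size_scale_leq _ _)) // size_prod_XsubC.
Qed.

End Iter.
Section Cx.
Variable R : rcfType.
Local Notation C := R[i].
Local Notation ImC := (@complex.Im R).
Local Notation ReC := (@complex.Re R).

Lemma key (w r r' : C) : 0 < ImC w -> r != 0 -> (r' = 0 \/ ImC (r' * conjc r) < 0) ->
  ImC ((r + w * r') * conjc (w * r)) < 0.
Proof.
case: w => a b; case: r => p q; case: r' => u v /= hb hr h.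
have hpq : 0 < p ^+ 2 + q ^+ 2.
  have : ~~ ((p == 0) && (q == 0)).
    apply: contra hr => /andP[/eqP -> /eqP ->]; by [].
  case/nandP => hne.
    case/lt_total/orP: hne => hne; nra.
  case/lt_total/orP: hne => hne; nra.
have E : ((p + (a * u - b * v)) * - (a * q + b * p) +
  (q + (a * v + b * u)) * (a * p - b * q) =
  - (p ^+ 2 + q ^+ 2) * b + (a ^+ 2 + b ^+ 2) * (u * - q + v * p))%R.
  ring.
rewrite E.
have hab : 0 <= a ^+ 2 + b ^+ 2 by nra.
case: h => [[-> ->]|h].
  nra.
nra.
Qed.

Lemma ImB (z x : C) : ImC (z - x) = ImC z - ImC x.
Proof. by case: z => a b; case: x => c d. Qed.

Lemma ImJ (x : C) : ImC (x * conjc x) = 0.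
Proof. case: x => a b /=. ring. Qed.

Lemma ImM (k : R) (x : C) : ImC ((k%:C)%C * x) = k * ImC x.
Proof. case: x => a b /=. ring. Qed.

Lemma inv_prod (c : C) (r : seq C) (z : C) : c != 0 -> all (fun x => ImC x <= 0) r ->
  0 < ImC z ->
  let q := c *: \prod_(x <- r) ('X - x%:P) in
  q.[z] != 0 /\ ((q^`()).[z] = 0 \/ ImC ((q^`()).[z] * conjc q.[z]) < 0).
Proof.
move=> hc; elim: r => [|x r IH] /=.
  move=> _ hz; rewrite big_nil alg_polyC derivC horner0 hornerC; split=> //; by left.
case/andP=> hx hr hz.
have [IH1 IH2] := IH hr hz.
rewrite big_cons -mul_polyC mulrCA mul_polyC.
set q0 := c *: _ in IH1 IH2 *.
rewrite derivM derivXsubC mul1r hornerD !hornerM hornerXsubC.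
have hw : 0 < ImC (z - x).
  by rewrite ImB subr_gt0 (le_lt_trans hx hz).
have hw0 : z - x != 0 by apply: contraTneq hw => ->; rewrite ltxx.
split; first by rewrite mulf_neq0.
right; exact: key.
Qed.

Lemma L1 (q : {poly C}) : (forall z, 0 < ImC z -> q.[z] != 0) ->
  forall z, 0 < ImC z -> (q - q^`()).[z] != 0.
Proof.
move=> hq z hz.
have [r Hr] := closed_field_poly_normal q.
have q0 : q != 0.
  have := hq (Complex 0 1) ltr01; apply: contraNneq => ->; by rewrite horner0.
have hc : lead_coef q != 0 by rewrite lead_coef_eq0.
have hr : all (fun x => ImC x <= 0) r.
  apply/allP => x xr; rewrite leNgt; apply/negP => hx.
  have := hq x hx; rewrite Hr hornerZ mulf_eq0 negb_or => /andP[_].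
  by move/negP; apply; rewrite -/(root _ x) root_prod_XsubC.
case: (inv_prod hc hr hz) => /=; rewrite -Hr => h1 h2.
apply/negP; rewrite hornerD hornerN subr_eq0 => /eqP he.
case: h2 => [h2|h2]; first by move: h1; rewrite he h2 eqxx.
by move: h2; rewrite -he ImJ ltxx.
Qed.


Local Notation toC := (real_complex R).

Lemma RR (p : {poly R}) :
  (forall z : C, 0 < ImC z -> (map_poly toC p).[z] != 0) ->
  exists s : seq R, p = lead_coef p *: \prod_(x <- s) ('X - x%:P).
Proof.
move=> hp.
have [->|p0] := eqVneq p 0.
  by exists [::]; rewrite lead_coef0 scale0r.
set pC := map_poly toC p in hp.
have [r Hr] := closed_field_poly_normal pC.
have pC0 : pC != 0 by rewrite map_poly_eq0.
have hc : lead_coef pC != 0 by rewrite lead_coef_eq0.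
have rootr x : x \in r -> root pC x.
  by move=> xr; rewrite Hr rootZ // root_prod_XsubC.
have Imle x : root pC x -> ImC x <= 0.
  move=> rx; rewrite leNgt; apply/negP => hx.
  by have := hp x hx; move: rx => /rootP ->; rewrite eqxx.
have conjpC : map_poly conjc pC = pC.
  rewrite /pC -map_poly_comp; apply: eq_map_poly => y /=; exact: conjc_real.
have Im0 x : x \in r -> ImC x = 0.
  move=> xr; have h1 := Imle x (rootr x xr).
  have : root pC (conjc x) by rewrite -complex_root_conj conjpC rootr.
  move/Imle; case: x {xr h1} => a b in h1 * => /= h2.
  apply/eqP; rewrite eq_le h1 /=; by rewrite -oppr_le0.
exists (map (@complex.Re R) r).
apply: (map_poly_inj toC); rewrite map_polyZ rmorph_prod big_map /= -/pC.
rewrite {1}Hr; congr (_ *: _).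
  rewrite /pC lead_coef_map_inj //; exact: complexI.
apply: eq_big_seq => x xr.
rewrite map_polyXsubC; congr ('X - _%:P).
by move: (Im0 x xr); case: x {xr} => a b /= ->.
Qed.

End Cx.

Section TK.
Variable R : realType.

Definition Acoef k d j : R := (((d - j)`! * 'C(k, d - j))%N)%:R.
Definition Bcoef k d j : R := (((d - j).-1`! * 'C(k, (d - j).-1))%N)%:R.

Definition U k d (f : {poly R}) : {poly R} :=
  \sum_(j < d.+1) f`_j *: (Acoef k d j *: 'X^j - (j%:R * Acoef k d j) *: 'X^(j.-1)
     - (k%:R * (d - j)%:R * Bcoef k d j) *: 'X^j).

Lemma N1 k m : ((m.+1 * 'C(k, m.+1) + m * 'C(k, m)) = k * 'C(k, m))%N.
Proof.
rewrite mul_bin_left -mulnDl; case: (leqP m k) => h; first by rewrite subnK.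
by rewrite bin_small // !muln0.
Qed.

Lemma scal_id k d i (fi fi1 : R) : (i <= d)%N -> (i == d -> fi1 = 0) ->
  fi * (Acoef k d i - k%:R * (d - i)%:R * Bcoef k d i) - fi1 * (i.+1%:R * Acoef k d i.+1)
  = - ((i.+1%:R / k.+1%:R * fi1 + (d%:R - 1 - i%:R) * fi) * ((d - i)`!)%:R * ('C(k.+1, d - i))%:R).
Proof.
move=> hid hfi.
rewrite /Acoef /Bcoef.
have [m hm] : exists m, d = (i + m)%N by exists (d - i)%N; rewrite subnKC.
rewrite hm addKn (_ : (i + m - i.+1 = m.-1)%N); last by lia.
rewrite (_ : (i + m)%:R - 1 - i%:R = m%:R - 1 :> R); last by rewrite natrD; ring.
case: m hm => [|m] hm.
  rewrite hfi; last by rewrite hm addn0.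
  rewrite !bin0 /= !mul0r !mulr0 subr0; ring.
have hC : ((m.+1)`! * 'C(k.+1, m.+1) = (k.+1 * 'C(k, m)) * m`!)%N.
  have := mul_bin_diag k.+1 m; rewrite factS /= => hd; nia.
rewrite -[X in _ = - X]mulrA -(natrM _ (m.+1)`! (binomial k.+1 m.+1)) hC /= factS !natrM.
set a := ('C(k, m.+1))%:R; set b := ('C(k, m))%:R; set F := (m`!)%:R.
have h1 : m.+1%:R * a + m%:R * b = k%:R * b :> R.
  by rewrite /a /b -!natrM -natrD N1.
apply/eqP; rewrite -subr_eq0; apply/eqP.
transitivity (fi * F * (m.+1%:R * a + m%:R * b - k%:R * b)); last first.
  by rewrite h1 subrr mulr0.
rewrite !mulrSr.
field.
by rewrite -mulrSr pnatr_eq0.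
Qed.

Lemma TU k d (f : {poly R}) : (size f <= d.+1)%N -> Tkd k d f = U k d f.
Proof.
move=> sf; have fd : f`_d.+1 = 0 by apply: nth_default.
rewrite /U.
have -> : \sum_(j < d.+1) f`_j *: (Acoef k d j *: 'X^j - (j%:R * Acoef k d j) *: 'X^(j.-1)
     - (k%:R * (d - j)%:R * Bcoef k d j) *: 'X^j) =
  \sum_(j < d.+1) (f`_j * (Acoef k d j - k%:R * (d - j)%:R * Bcoef k d j)) *: 'X^j -
  \sum_(j < d.+1) (f`_j * (j%:R * Acoef k d j)) *: 'X^(j.-1).
  rewrite -sumrB; apply: eq_bigr => j _.
  rewrite !scalerBr !scalerA mulrBr scalerBl; by rewrite addrAC.
rewrite [X in _ = _ - X]big_ord_recl /= mul0r mulr0 scale0r add0r.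
have -> : \sum_(i < d) (f`_(bump 0 i) * ((bump 0 i)%:R * Acoef k d (bump 0 i))) *: 'X^((bump 0 i).-1)
  = \sum_(i < d.+1) (f`_i.+1 * (i.+1%:R * Acoef k d i.+1)) *: 'X^i.
  by rewrite big_ord_recr /= fd mul0r scale0r addr0.
rewrite -sumrB /Tkd -sumrN; apply: eq_bigr => i _.
rewrite -scalerBl -scaleNr; congr (_ *: _).
rewrite scal_id //; first by rewrite -ltnS.
by move/eqP=> ->.
Qed.

End TK.

Section Cx2.
Variable R : realType.
Local Notation C := R[i].
Local Notation ImC := (@complex.Im R).
Local Notation toC := (real_complex R).

Lemma Im_nat (m : nat) : ImC (m%:R) = 0.
Proof. by rewrite -(rmorph_nat toC). Qed.

Lemma ImM_nat (m : nat) (x : C) : ImC (m%:R * x) = m%:R * ImC x.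
Proof. by rewrite -(rmorph_nat toC) ImM. Qed.

Lemma nz_of_Im (w : C) : 0 < ImC w -> w != 0.
Proof. by apply: contraTneq => ->; rewrite ltxx. Qed.

Definition Yb (k : nat) (b : C) : {poly C} := (k%:R : C) *: 'X - b%:P.

Lemma factor_nz (rho : R) (k : nat) (a b : C) : (0 < k)%N ->
  0 <= rho <= k%:R^-1 -> 0 < ImC a -> 0 < ImC b ->
  ('X - toC rho *: Yb k b).[a] != 0.
Proof.
move=> k0 /andP[r0 r1] ha hb; apply: nz_of_Im.
rewrite /Yb hornerD hornerN hornerZ hornerD hornerN hornerZ hornerX hornerC.
rewrite ImB ImM ImB ImM_nat.
have kp : 0 < k%:R :> R by rewrite ltr0n.
have rk : rho * k%:R <= 1.
  by have := ler_wpM2r (ltW kp) r1; rewrite mulVf // lt0r_neq0.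
case: (eqVneq rho 0) => [->|rn0]; first by rewrite mul0r subr0.
have rp : 0 < rho by rewrite lt_def rn0.
nra.
Qed.

End Cx2.

Section Cx3.
Variable R : realType.
Local Notation C := R[i].
Local Notation ImC := (@complex.Im R).
Local Notation toC := (real_complex R).

Lemma hom_eval d (p Y : {poly C}) z :
  (hom d p Y).[z] = \sum_(j < d.+1) p`_j * (z ^+ j * Y.[z] ^+ (d - j)).
Proof.
rewrite /hom horner_sum; apply: eq_bigr => j _.
by rewrite hornerZ hornerM hornerXn horner_exp.
Qed.

Lemma hom_deriv_eval d (p Y : {poly C}) z :
  ((hom d p Y)^`()).[z] = \sum_(j < d.+1) p`_j *
    (j%:R * z ^+ j.-1 * Y.[z] ^+ (d - j) +
     z ^+ j * (Y^`().[z] * Y.[z] ^+ (d - j).-1 * (d - j)%:R)).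
Proof.
rewrite /hom (big_morph (@deriv _) (@derivD _) (@deriv0 _)) horner_sum; apply: eq_bigr => j _.
rewrite derivZ derivM derivXn deriv_exp hornerZ hornerD !hornerM hornerMn hornerXn.
rewrite hornerMn hornerM hornerXn !horner_exp.
set A := z ^+ j.-1; set B := Y.[z] ^+ (d - j); set D := Y.[z] ^+ (d - j).-1.
set E := z ^+ j; set G := Y^`().[z].
ring.
Qed.

Definition Ykz (k : nat) (z : C) : {poly C} := (k%:R * z)%:P - 'X.

Definition Qz k d (p : {poly C}) (z : C) : {poly C} :=
  \sum_(j < d.+1) p`_j *: ((z ^+ j - j%:R * z ^+ j.-1) *: Ykz k z ^+ (d - j)
     - (k%:R * (d - j)%:R * z ^+ j) *: Ykz k z ^+ (d - j).-1).

Lemma Qz_eval k d (p : {poly C}) z b :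
  (Qz k d p z).[b] = (hom d p (Yb k b) - (hom d p (Yb k b))^`()).[z].
Proof.
rewrite hornerD hornerN hom_eval hom_deriv_eval -sumrB /Qz horner_sum.
apply: eq_bigr => j _.
have Yz : (Yb k b).[z] = k%:R * z - b.
  by rewrite /Yb hornerD hornerN hornerZ hornerX hornerC.
have dY : (Yb k b)^`().[z] = k%:R.
  by rewrite /Yb derivB derivZ derivX derivC subr0 hornerZ hornerC mulr1.
rewrite Yz dY hornerZ hornerD hornerN !hornerZ !horner_exp /Ykz hornerD hornerN hornerC hornerX.
set A := z ^+ j.-1; set B := (k%:R * z - b) ^+ (d - j); set D := (k%:R * z - b) ^+ (d - j).-1.
set E := z ^+ j.
ring.
Qed.


Lemma mapCZ (c : R) (p : {poly R}) : map_poly toC (c *: p) = toC c *: map_poly toC p.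
Proof. by apply/polyP => i; rewrite coefZ !coef_map /= coefZ rmorphM. Qed.

Lemma mapCB (p q : {poly R}) : map_poly toC (p - q) = map_poly toC p - map_poly toC q.
Proof. by apply/polyP => i; rewrite coefB !coef_map /= coefB rmorphB. Qed.

Lemma mapCXn (m : nat) : map_poly toC ('X^m : {poly R}) = 'X^m.
Proof. by apply/polyP => i; rewrite coef_map /= !coefXn; case: (i == m). Qed.

Lemma U_eval k d (f : {poly R}) z :
  (map_poly toC (U k d f)).[z] = (iterL k (Qz k d (map_poly toC f) z)).[k%:R * z].
Proof.
rewrite /U (big_morph (map_poly toC) (rmorphD _) (rmorph0 _)) horner_sum /Qz iterL_sum horner_sum.
apply: eq_bigr => j _.
rewrite iterLZ iterLB !iterLZ !hornerZ hornerD hornerN !hornerZ /Ykz !iterL_pow coef_map.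
rewrite !mapCZ !mapCB !mapCZ !mapCXn.
rewrite !hornerZ !hornerD !hornerN !hornerZ !hornerXn.
rewrite /Acoef /Bcoef !rmorphM !rmorph_nat.
set A := z ^+ j.-1; set E := z ^+ j.
ring.
Qed.


Lemma iter_nz k (q : {poly C}) : (forall b, 0 < ImC b -> q.[b] != 0) ->
  forall b, 0 < ImC b -> (iterL k q).[b] != 0.
Proof.
move=> hq; elim: k => [|k IH] //.
by rewrite /iterL iterS -/(iterL k q) /Lop; apply: L1.
Qed.

Lemma mapC_prod (s : seq R) :
  map_poly toC (\prod_(x <- s) ('X - x%:P)) = \prod_(x <- map toC s) ('X - x%:P).
Proof.
rewrite (big_morph (map_poly toC) (rmorphM _) (rmorph1 _)) big_map.
by apply: eq_bigr => x _; rewrite map_polyXsubC.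
Qed.

Theorem part2 d k (f : {poly R}) : (0 < k)%N -> size f = d.+1 ->
  interval_rooted 0 (k%:R^-1) f -> real_rooted (Tkd k d f).
Proof.
move=> k0 sf [s [hs hf]].
rewrite TU ?sf //; apply: RR => z hz.
rewrite U_eval.
have kz : 0 < ImC (k%:R * z) by rewrite ImM_nat pmulr_rgt0 ?ltr0n.
apply: iter_nz (kz) => b hb.
rewrite Qz_eval; apply: L1 (hz) => a ha.
have f0 : f != 0 by rewrite -size_poly_gt0 sf.
have lc0 : lead_coef f != 0 by rewrite lead_coef_eq0.
have ds : size s = d.
  by move: sf; rewrite hf size_scale // size_prod_XsubC => -[].
have hfC : map_poly toC f = toC (lead_coef f) *: \prod_(x <- map toC s) ('X - x%:P).
  by rewrite {1}hf mapCZ mapC_prod.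
rewrite hfC -ds -(size_map toC s) hom_prod hornerZ horner_prod.
rewrite mulf_neq0 //; first by rewrite fmorph_eq0.
rewrite big_map prodf_seq_neq0; apply/allP => x xs /=.
apply: factor_nz => //.
by move/allP: hs => /(_ x xs).
Qed.

End Cx3.

Section MP.
Variable R : realType.
Variable n : nat.
Implicit Types (p q : {mpoly R[n]}) (w : 'I_n -> R).

Lemma DirD w p q : Dir w (p + q) = Dir w p + Dir w q.
Proof. by rewrite /Dir -big_split; apply: eq_bigr => i _; rewrite mderivD scalerDr. Qed.

Lemma DirZ w c p : Dir w (c *: p) = c *: Dir w p.
Proof. by rewrite /Dir scaler_sumr; apply: eq_bigr => i _; rewrite mderivZ !scalerA mulrC. Qed.

Lemma DirN w p : Dir w (- p) = - Dir w p.
Proof. by rewrite -scaleN1r DirZ scaleN1r. Qed.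

Lemma DirB w p q : Dir w (p - q) = Dir w p - Dir w q.
Proof. by rewrite DirD DirN. Qed.

Lemma Dir0 w : Dir w 0 = 0.
Proof. by have := DirZ w 0 0; rewrite !scale0r. Qed.

Lemma DirM w p q : Dir w (p * q) = Dir w p * q + p * Dir w q.
Proof.
rewrite /Dir mulr_suml mulr_sumr -big_split; apply: eq_bigr => i _.
by rewrite mderivM scalerDr -scalerAl -scalerAr.
Qed.

Lemma DirC w c : Dir w c%:MP = 0.
Proof. by rewrite /Dir big1 // => i _; rewrite mderivC scaler0. Qed.

Lemma DirX w (i : 'I_n) : Dir w 'X_i = (w i)%:MP.
Proof.
have h0 : (U_(i) - U_(i))%MM = 0%MM by apply/mnmP => j; rewrite mnmBE subnn mnm0E.
rewrite /Dir (bigD1 i) //= big1 ?addr0.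
  by rewrite mderivX mnm1E eqxx h0 mpolyX0 scale1r -mul_mpolyC mulr1.
move=> j ji; rewrite mderivX mnm1E eq_sym (negbTE ji) scale0r scaler0 //.
Qed.


Section Chain.
Variable S : comNzRingType.
Variable F : {rmorphism R -> {poly S}}.
Variable g : 'I_n -> {poly S}.
Variable w : 'I_n -> R.
Hypothesis hF : forall c, (F c)^`() = 0.
Hypothesis hg : forall i, (g i)^`() = F (w i).

Let Ok q := (mmap F g q)^`() = mmap F g (Dir w q).

Let OkD p q : Ok p -> Ok q -> Ok (p + q).
Proof. by rewrite /Ok => hp hq; rewrite mmapD derivD hp hq DirD mmapD. Qed.

Let OkM p q : Ok p -> Ok q -> Ok (p * q).
Proof.
rewrite /Ok => hp hq; rewrite !rmorphM derivM hp hq DirM mmapD !rmorphM //.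
Qed.

Let OkC c : Ok c%:MP.
Proof. by rewrite /Ok mmapC hF DirC mmap0. Qed.

Let OkX i : Ok 'X_i.
Proof. by rewrite /Ok mmapX mmap1U hg DirX mmapC. Qed.

Let OkXn i m : Ok ('X_i ^+ m).
Proof.
elim: m => [|m IH]; first by rewrite expr0 -mpolyC1; apply: OkC.
by rewrite exprS; apply: OkM.
Qed.

Let OkMon m : Ok 'X_[m].
Proof.
rewrite mpolyXE_id; elim/big_rec: _ => [|i x _ hx]; last by apply: OkM.
by rewrite -mpolyC1; apply: OkC.
Qed.

Lemma chain q : (mmap F g q)^`() = mmap F g (Dir w q).
Proof.
elim/mpolyind: q => [|c m p _ _ hp].
  by rewrite mmap0 deriv0 Dir0 mmap0.
apply: OkD => //; rewrite -mul_mpolyC; apply: OkM => //.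
Qed.

End Chain.


Definition bihom d (P : {poly {poly R}}) := forall b j, (b + j != d)%N -> P`_b`_j = 0.

Lemma bihom0 d : bihom d 0.
Proof. by move=> b j _; rewrite !coef0. Qed.

Lemma bihomD d P Q : bihom d P -> bihom d Q -> bihom d (P + Q).
Proof. by move=> hP hQ b j hbj; rewrite !coefD hP // hQ // addr0. Qed.

Lemma bihomM d1 d2 P Q : bihom d1 P -> bihom d2 Q -> bihom (d1 + d2)%N (P * Q).
Proof.
move=> hP hQ b j hbj; rewrite coefM coef_sum big1 // => i _.
rewrite coefM big1 // => l _.
have [e1|e1] := eqVneq (i + l)%N d1.
  rewrite (hQ (b - i)%N (j - l)%N) ?mulr0 //.
  have := ltn_ord i; have := ltn_ord l; move: hbj e1; lia.
by rewrite hP ?mul0r.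
Qed.

Lemma bihomC (c : R) : bihom 0 (c%:P%:P).
Proof.
move=> b j hbj; rewrite coefC; case: b hbj => [|b] hbj /=; last by rewrite coef0.
by rewrite coefC; case: j hbj.
Qed.

Lemma bihomX1 (a c : R) : bihom 1 ((a *: 'X)%:P + c%:P%:P * 'X).
Proof.
move=> b j hbj; rewrite coefD coefMX !coefC.
case: b hbj => [|[|b]] /= hbj.
  by rewrite addr0 coefZ coefX; case: j hbj => [|[|j]] //=; rewrite mulr0.
  by rewrite add0r coefC; case: j hbj.
by rewrite addr0 coef0.
Qed.

Lemma bihomXn d P m : bihom d P -> bihom (d * m)%N (P ^+ m).
Proof.
move=> hP; elim: m => [|m IH]; first by rewrite muln0 expr0 -[1]/((1 : R)%:P%:P); exact: bihomC.
by rewrite exprS mulnS; apply: bihomM.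
Qed.

Lemma bihom_size d P : bihom d P -> (size P <= d.+1)%N.
Proof.
move=> hP; apply/leq_sizeP => b hb; apply/polyP => j; rewrite coef0 hP //.
by move: hb; lia.
Qed.

Lemma bihom_coef d P j : bihom d P ->
  (P.[(-1)%:P])`_j = if (j <= d)%N then (-1) ^+ (d - j) * P`_(d - j)`_j else 0.
Proof.
move=> hP; rewrite (horner_coef_wide _ (bihom_size hP)) coef_sum.
case: ifP => hj.
  have hdj : (d - j < d.+1)%N by lia.
  rewrite (bigD1 (Ordinal hdj)) //= big1 ?addr0.
    by rewrite -rmorphXn coefMC mulrC.
  move=> i /eqP hi; rewrite -rmorphXn coefMC hP ?mul0r //.
  apply/eqP => he; apply: hi; apply: val_inj => /=; lia.
rewrite big1 // => i _; rewrite -rmorphXn coefMC hP ?mul0r //.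
by apply/eqP => he; move: hj; lia.
Qed.

Lemma bihom_eval0 d P : bihom d P -> P.[(-1)%:P] = 0 -> P = 0.
Proof.
move=> hP h0; apply/polyP => b; apply/polyP => j; rewrite !coef0.
have [e|e] := eqVneq (b + j)%N d; last by rewrite hP.
have := bihom_coef j hP; rewrite h0 coef0.
have -> : (j <= d)%N by lia.
have -> : (d - j = b)%N by lia.
move/esym/eqP; rewrite mulf_eq0 signr_eq0 /= => /eqP //.
Qed.


Lemma bihomN d P : bihom d P -> bihom d (- P).
Proof. by move=> hP b j hbj; rewrite !coefN hP // oppr0. Qed.

Lemma bihomCX (c : R) j : bihom j ((c *: 'X^j)%:P).
Proof.
move=> b l hbl; rewrite coefC; case: b hbl => [|b] hbl /=; last by rewrite coef0.
by rewrite coefZ coefXn; move: hbl; rewrite add0n eq_sym => /negbTE ->; rewrite mulr0.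
Qed.

Lemma bihomY0 : bihom 1 (0%:P - 'X : {poly {poly R}}).
Proof.
have -> : (0%:P - 'X : {poly {poly R}}) = (0 *: 'X)%:P + ((-1 : R)%:P)%:P * 'X.
  by rewrite scale0r !polyCN mulN1r.
exact: bihomX1.
Qed.

Definition G (e v : 'I_n -> R) i : {poly {poly R}} := (e i *: 'X)%:P + (v i)%:P%:P * 'X.
Definition sig e v q : {poly {poly R}} := mmap ((@polyC _) \o (@polyC R)) (G e v) q.

Lemma bihom_mmap1 e v m : bihom (mdeg m) (mmap1 (G e v) m).
Proof.
rewrite mdegE /mmap1; elim/big_rec2: _ => [|i x y _ hy].
  by rewrite -[1]/((1 : R)%:P%:P); exact: bihomC.
have := bihomM (bihomXn (m:=m i) (@bihomX1 (e i) (v i))) hy; rewrite mul1n; exact.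
Qed.

Lemma bihom_sig e v d h : h \is d.-homog -> bihom d (sig e v h).
Proof.
move=> hh; rewrite /sig /mmap big_seq; apply: big_ind => [|x y|m hm].
- exact: bihom0.
- exact: bihomD.
have hb := bihomM (@bihomC (h@_m)) (@bihom_mmap1 e v m).
by rewrite add0n (dhomog_mf hh hm) in hb.
Qed.

Lemma Pform d P : bihom d P ->
  P = \sum_(j < d.+1) ((P.[(-1)%:P])`_j *: 'X^j) *: (0%:P - 'X) ^+ (d - j).
Proof.
move=> hP; apply/eqP; rewrite -subr_eq0; apply/eqP; apply: (@bihom_eval0 d).
  apply: bihomD => //; apply: bihomN; apply: big_ind => [|x y|j _].
  - exact: bihom0.
  - exact: bihomD.
  rewrite -[_ *: (0%:P - _) ^+ _]mul_polyC; have := bihomM (@bihomCX (P.[(-1)%:P])`_j j) (bihomXn (m:=(d - j)%N) bihomY0).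
  have e1 : (j + 1 * (d - j) = d)%N by rewrite mul1n subnKC // -ltnS.
  by rewrite e1.
rewrite hornerD hornerN horner_sum.
under eq_bigr do rewrite hornerZ horner_exp hornerD hornerN hornerC hornerX.
have hm1 : (0 : {poly R}) - (-1)%:P = 1 by rewrite sub0r polyCN opprK.
under eq_bigr do rewrite hm1 expr1n mulr1.
rewrite -poly_def; apply/eqP; rewrite subr_eq0; apply/eqP; apply/polyP => i.
rewrite coef_poly; case: ifP => // hi.
by rewrite (bihom_coef i hP) -ltnS hi.
Qed.


Lemma mmap_ext (S : nzRingType) (f1 f2 : R -> S) (g1 g2 : 'I_n -> S) q :
  f1 =1 f2 -> g1 =1 g2 -> mmap f1 g1 q = mmap f2 g2 q.
Proof.
move=> hf hg; rewrite /mmap; apply: eq_bigr => m _.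
by rewrite hf (mmap1_eq _ hg).
Qed.

Lemma mmap_horner (S : comNzRingType) (f : R -> {poly S}) (g : 'I_n -> {poly S}) (a : S) q :
  (mmap f g q).[a] = mmap (fun c => (f c).[a]) (fun i => (g i).[a]) q.
Proof.
rewrite /mmap horner_sum; apply: eq_bigr => m _.
rewrite hornerM /mmap1 horner_prod; congr (_ * _); apply: eq_bigr => i _.
by rewrite horner_exp.
Qed.

Lemma restr_sig q e v (c : R) (x : 'I_n -> R) : (forall i, x i = - (c * v i)) ->
  restr q e x = (sig e v q).[c%:P].
Proof.
move=> hx; rewrite /restr /sig mmap_horner; apply: mmap_ext => [c'|i] /=.
  by rewrite hornerC.
rewrite /G hornerD hornerC hornerM hornerX hx hornerC polyCN opprK -polyCM mulrC //.
Qed.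

Lemma sig_chain e v q : (sig e v q)^`() = sig e v (Dir v q).
Proof.
apply: chain => [c|i] /=; first exact: derivC.
rewrite /G derivD derivC add0r mul_polyC derivZ derivX alg_polyC //.
Qed.

Lemma restr0_chain q e : (restr q e (fun _ => 0))^`() = restr (Dir e q) e (fun _ => 0).
Proof.
have E p : restr p e (fun _ => 0) = mmap (@polyC R) (fun i => e i *: 'X - 0%:P) p.
  by apply: mmap_ext.
rewrite !E; apply: chain => [c|i] /=; first exact: derivC.
by rewrite derivB derivC subr0 derivZ derivX alg_polyC.
Qed.

Lemma Dir_comm e v q : Dir e (Dir v q) = Dir v (Dir e q).
Proof.
rewrite /Dir.
under eq_bigr do rewrite (big_morph (mderiv _) (@mderivD _ _ _) (@mderiv0 _ _ _)) scaler_sumr.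
under [in RHS]eq_bigr do rewrite (big_morph (mderiv _) (@mderivD _ _ _) (@mderiv0 _ _ _)) scaler_sumr.
rewrite exchange_big; apply: eq_bigr => i _; apply: eq_bigr => j _.
by rewrite !mderivZ !scalerA mulrC mderiv_comm.
Qed.


Definition IM v k q := iter k (fun q => q - Dir v q) q.

Lemma IMS v k q : IM v k.+1 q = IM v k q - Dir v (IM v k q).
Proof. by []. Qed.

Lemma IM_Dir e v k q : Dir e (IM v k q) = IM v k (Dir e q).
Proof.
elim: k => [|k IH] //; rewrite !IMS DirB IH Dir_comm IH //.
Qed.

Lemma sigD e v p q : sig e v (p + q) = sig e v p + sig e v q.
Proof. exact: mmapD. Qed.

Lemma sigB e v p q : sig e v (p - q) = sig e v p - sig e v q.
Proof. exact: mmapB. Qed.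

Lemma sigZ e v c q : sig e v (c *: q) = c%:P *: sig e v q.
Proof. by rewrite /sig mmapZ /= mul_polyC. Qed.

Lemma sig_IM e v k q : sig e v (IM v k q) = iterL k (sig e v q).
Proof.
elim: k => [|k IH] //; rewrite IMS sigB -sig_chain IH.
by rewrite /iterL iterS -/(iterL k _).
Qed.

Lemma iterLMn (S : comNzRingType) k (p : {poly S}) m : iterL k (p *+ m) = iterL k p *+ m.
Proof. by rewrite -scaler_nat iterLZ scaler_nat. Qed.

End MP.

Section Fin.
Variable R : realType.
Variable n : nat.

Lemma Wlem k d (c : nat -> {poly R}) :
  (iterL k (\sum_(j < d.+1) c j *: (0%:P - 'X) ^+ (d - j))).[0%:P] =
  \sum_(j < d.+1) c j * (((d - j)`! * 'C(k, d - j))%N)%:R.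
Proof.
rewrite iterL_sum horner_sum; apply: eq_bigr => j _.
by rewrite iterLZ hornerZ iterL_pow.
Qed.

Lemma Vlem k d (c : nat -> {poly R}) :
  (iterL k (\sum_(j < d.+1) c j *: (0%:P - 'X) ^+ (d - j))^`()).[0%:P] =
  \sum_(j < d.+1) c j * (- ((((d - j).-1)`! * 'C(k, (d - j).-1))%N)%:R *+ (d - j)).
Proof.
rewrite (big_morph (@deriv _) (@derivD _) (@deriv0 _)).
rewrite iterL_sum horner_sum; apply: eq_bigr => j _.
rewrite derivZ deriv_exp derivB derivC derivX sub0r mulN1r iterLZ hornerZ.
by rewrite iterLMn iterLN hornerMn hornerN iterL_pow.
Qed.

Lemma part1 d k (h : {mpoly R[n]}) e v : h \is d.-homog ->
  gv k h e v = Tkd k d (restr h e v).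
Proof.
move=> hh.
set P := sig e v h.
have hb : bihom d P := bihom_sig e v hh.
have fdef : restr h e v = P.[(-1)%:P].
  by apply: restr_sig => i; rewrite mulN1r opprK.
have r0 q : restr q e (fun _ => 0) = (sig e v q).[0%:P].
  by apply: restr_sig => i; rewrite mul0r oppr0.
have sf : (size (restr h e v) <= d.+1)%N.
  apply/leq_sizeP => j hj; rewrite fdef (bihom_coef j hb).
  by case: ifP => // hj'; move: hj hj'; lia.
rewrite TU // /gv -/(IM v k _) r0 sig_IM sigD sigB sigZ -sig_chain -/P.
rewrite iterLD iterLB iterLZ !hornerD hornerN hornerZ.
have -> : (iterL k (sig e v (Dir e h))).[0%:P] = ((iterL k P).[0%:P])^`().
  by rewrite -sig_IM -IM_Dir -r0 -restr0_chain r0 sig_IM.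
rewrite fdef; set f := P.[(-1)%:P].
have HP := Pform hb; rewrite -/f in HP.
rewrite HP (Wlem k d (fun j => f`_j *: 'X^j)) (Vlem k d (fun j => f`_j *: 'X^j)) /U.
rewrite (big_morph (@deriv _) (@derivD _) (@deriv0 _)).
rewrite mulr_sumr -sumrB -big_split /=; apply: eq_bigr => j _.
have dN (N : nat) : ((N%:R : {poly R}))^`() = 0 by rewrite -polyC_natr derivC.
rewrite derivM dN mulr0 addr0 derivZ derivXn /Acoef /Bcoef.
rewrite -!mul_polyC !polyCM !polyC_natr -!mulNrn.
set X1 := 'X^j; set X2 := 'X^(j.-1); set F := (f`_j)%:P.
ring.
Qed.

End Fin.

Unset Implicit Arguments.
Set Strict Implicit.

Theorem lemma6p8 (R : realType) (n d k : nat) (h : {mpoly R[n]})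
    (e v : 'I_n -> R) :
  h \is d.-homog -> hyperbolic h e -> (0 < k)%N ->
  gv k h e v = Tkd k d (restr h e v) /\
  (forall f : {poly R}, size f = d.+1 -> interval_rooted 0 (k%:R^-1) f ->
     real_rooted (Tkd k d f)).
Proof.
move=> hh _ k0; split; first exact: part1.
move=> f sf hf; exact: part2.
Qed.
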